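(* Let $C_6=\langle a\mid a^6=e\rangle$ and $\Delta=\{a,a^{-1},a^2,a^{-2}\}$ (so $C_\Delta(C_6)$ is the Johnson graph $J(4,2)$). Then $W=W_{a}U_{a}+W_{a^{-1}}U_{a^{-1}}+W_{a^2}U_{a^2}+W_{a^{-2}}U_{a^{-2}}$ is a homogeneous scalar quantum walk on $C_\Delta(C_6)$ if and only if, up to a global phase, $W_a=\tfrac12e^{i\phi}$, $W_{a^{-1}}=\tfrac12$, $W_{a^2}=\tfrac{(-1)^q}{2}$, $W_{a^{-2}}=\tfrac{(-1)^{q+1}}{2}e^{i\phi}$ for some real $\phi$ and some integer $q$.
   Context: The Cayley graph $C_\Delta(\Gamma)$ has vertex set $\Gamma$ and directed edges $(g,g\delta)$, $g\in\Gamma,\delta\in\Delta$. Let $\ell^2(\Gamma)$ have orthonormal basis $\{|g\rangle\}_{g\in\Gamma}$ and for $\delta\in\Gamma$ let $U_\delta|g\rangle=|g\delta\rangle$. A homogeneous scalar quantum walk on $C_\Delta(\Gamma)$ is a unitary operator $W=\sum_{\delta\in\Delta}W_\delta U_\delta$ with all complex coefficients $W_\delta$ nonzero. ''Up to a global phase'' means that all coefficients may be multiplied by a common complex number of modulus one. The Johnson graph $J(n,k)$ has as vertices the $k$-element subsets of an $n$-element set, two subsets being adjacent when they share $k-1$ elements. *)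

(* Defs.v *)
From HB Require Import structures.
From mathcomp Require Import all_boot all_order all_algebra.
From mathcomp Require Import spectral.
From mathcomp Require Import reals trigo.
From mathcomp Require Import complex.
Set Implicit Arguments. Unset Strict Implicit. Unset Printing Implicit Defensive.
Import Order.TTheory GRing.Theory Num.Theory.
Local Open Scope ring_scope.
Local Open Scope complex_scope.

(* The cyclic group C_6 = <a | a^6 = e> is written additively as 'Z_6,
   with generator a = 1, so a^k corresponds to k%:R. *)

(* ell^2(C_6) = C^6, basis vectors |g> indexed by g : 'Z_6.
   U d |g> = |g + d>, i.e. the matrix entry (h, g) is [h == g + d]. *)
Definition Ushift (R : realType) (d : 'Z_6) : 'M[R[i]]_6 :=
  \matrix_(h, g) ((h == (g + d)%R :> 'Z_6)%:R).

Definition walkC6 (R : realType) (wa wai wa2 wa2i : R[i]) : 'M[R[i]]_6 :=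
  wa *: Ushift R 1 + wai *: Ushift R (- 1) + wa2 *: Ushift R 2
  + wa2i *: Ushift R (- 2).

Definition homogeneous_scalar_QW_C6 (R : realType) (wa wai wa2 wa2i : R[i]) : Prop :=
  walkC6 wa wai wa2 wa2i \is unitarymx /\ (walkC6 wa wai wa2 wa2i)^T \is unitarymx
  /\ [/\ wa != 0, wai != 0, wa2 != 0 & wa2i != 0].

Definition expi (R : realType) (phi : R) : R[i] := (cos phi)%:C + 'i * (sin phi)%:C.

(* Main.v *)
Require Import Defs.
From HB Require Import structures.
From mathcomp Require Import all_boot all_order all_algebra.
From mathcomp Require Import spectral.
From mathcomp Require Import reals trigo.
From mathcomp Require Import complex.
Import Order.TTheory GRing.Theory Num.Theory Num.Def.
Local Open Scope ring_scope.
Local Open Scope complex_scope.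
Local Open Scope sesquilinear_scope.

Ltac evb := repeat match goal with |- context [@eq_op ?T ?x ?y] =>
  let v := eval vm_compute in (@eq_op T x y) in
  change (@eq_op T x y) with v end.

Lemma walkE (R : realType) (a b c d : R[i]) h g :
  walkC6 a b c d h g = a * (h == g + 1)%:R + b * (h == g - 1)%:R
     + c * (h == g + 2)%:R + d * (h == g - 2)%:R.
Proof. by rewrite !mxE. Qed.

Lemma trCE (C : numClosedFieldType) n (M : 'M[C]_n) i j : (M^t*) i j = conjC (M j i).
Proof. by rewrite !mxE. Qed.

Lemma prodE (C : numClosedFieldType) (M : 'M[C]_6) i j : (M *m M^t*) i j =
  \sum_(k < 6) M i k * conjC (M j k).
Proof. rewrite !mxE; apply: eq_bigr => k _; by rewrite trCE. Qed.

From mathcomp Require Import ring.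

Lemma scalar1E (C : numClosedFieldType) n (i j : 'I_n) : (1%:M : 'M[C]_n) i j = (i == j)%:R.
Proof. by rewrite mxE. Qed.

Ltac use h := let T := type of h in match T with ?X = _ => transitivity X; [ring | exact h] end.

Ltac simp := rewrite /= ?mulr1 ?mulr0 ?addr0 ?add0r ?conjC0 ?conjC1 ?mul0r ?mulr0 ?rmorphD ?rmorphM ?conjC0 ?conjC1 ?mulr1 ?mulr0 ?addr0 ?add0r ?mul0r.

Definition conds {R : realType} (a b c d : R[i]) :=
  [/\ a * conjC a + b * conjC b + c * conjC c + d * conjC d = 1,
      b * conjC d + c * conjC a = 0,
      a * conjC b + d * conjC c = 0 &
      a * conjC d + b * conjC c + d * conjC a + c * conjC b = 0].

Lemma unitary_conds (R : realType) (a b c d : R[i]) :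
  walkC6 a b c d \is unitarymx <-> conds a b c d.
Proof.
split.
  move/unitarymxP => H.
  have e := fun (k l : nat) => congr1 (fun M : 'M[R[i]]_6 => M (inZp k : 'I_6) (inZp l : 'I_6)) H.
  have e0 := e 0%N 0%N; have e1 := e 1%N 0%N; have e2 := e 2%N 0%N; have e3 := e 3%N 0%N.
  have e4 := e 4%N 0%N; have e5 := e 5%N 0%N.
  move: e0 e1 e2 e3 e4 e5; rewrite /= !prodE !scalar1E !big_ord_recl !big_ord0 !walkE.
  evb; simp => e0 e1 e2 e3 e4 e5.
  split; first [use e0 | use e1 | use e2 | use e3 | use e4 | use e5].
case=> E0 E1 E2 E3.
have E1c := congr1 conjC E1; have E2c := congr1 conjC E2.
rewrite !rmorphD !rmorphM /= in E1c E2c.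
rewrite !conjCK in E1c; rewrite !conjCK in E2c; rewrite !conjC0 in E1c E2c.
apply/unitarymxP/matrixP => i j.
rewrite prodE scalar1E !big_ord_recl big_ord0 !walkE.
case: i => [[|[|[|[|[|[|i]]]]]] Hi] //; case: j => [[|[|[|[|[|[|j]]]]]] Hj] //.
all: evb; simp.
all: first [use E0 | use E1 | use E2 | use E3 | use E1c | use E2c].
Qed.

From mathcomp Require Import lra.
Lemma angle (R : realType) (z : R[i]) : z * conjC z = 1 -> exists phi, expi phi = z.
Proof.
case: z => x y /eqP; rewrite eq_complex /= => /andP [/eqP h1 _].
have hx : -1 <= x <= 1 by apply/andP; split; nra.
have hs : Num.sqrt (1 - x ^+ 2) = `|y|.
  by rewrite -sqrtr_sqr; congr Num.sqrt; rewrite -h1; ring.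
have hc : cos (acos x) = x by rewrite acosK // in_itv.
have [hy|hy] := lerP 0 y.
  exists (acos x); apply/eqP; rewrite /expi eq_complex /= hc sin_acos // hs ger0_norm //.
  apply/andP; split; apply/eqP; ring.
exists (- acos x); apply/eqP; rewrite /expi eq_complex /= cosN sinN hc sin_acos // hs ltr0_norm //.
apply/andP; split; apply/eqP; ring.
Qed.

Lemma expi_conj (R : realType) (phi : R) : expi phi * conjC (expi phi) = 1.
Proof.
apply/eqP; rewrite /expi eq_complex /=.
have := cos2Dsin2 phi => h.
apply/andP; split; apply/eqP; last by ring. by transitivity (cos phi ^+ 2 + sin phi ^+ 2); [ring | exact h].
Qed.

Lemma nz_of_mul1 {F : fieldType} {x y : F} : x * y = 1 -> x != 0.
Proof. by move=> h; apply/eqP => x0; move: h; rewrite x0 mul0r => /eqP; rewrite eq_sym oner_eq0. Qed.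

Lemma conj_inv (C : numClosedFieldType) (x : C) : x * conjC x = 1 -> conjC x = x^-1.
Proof.
move=> h; have nx : x != 0 := nz_of_mul1 h.
by rewrite -[conjC x]mul1r -(mulVf nx) -mulrA h mulr1.
Qed.

Local Close Scope sesquilinear_scope.

Theorem mainTheorem11 (R : realType) (wa wai wa2 wa2i : R[i]) :
  homogeneous_scalar_QW_C6 wa wai wa2 wa2i <->
  exists (c : R[i]) (phi : R) (q : int),
    `|c| = 1 /\
    [/\ wa = c * (2^-1 * expi phi),
        wai = c * 2^-1,
        wa2 = c * ((-1) ^ q / 2)
      & wa2i = c * ((-1) ^ (q + 1) / 2 * expi phi)].
Proof.
have n2 : (2 : R[i]) != 0 by rewrite pnatr_eq0.
have nN1 : (-1 : R[i]) != 0 by rewrite oppr_eq0 oner_eq0.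
split.
  rewrite /homogeneous_scalar_QW_C6 => -[hU [_ [na nb nc nd]]].
  have [E0 E1 E2 E3] := (unitary_conds _ wa wai wa2 wa2i).1 hU.
  have E1c := congr1 conjC E1.
  rewrite !rmorphD !rmorphM /= in E1c; rewrite !conjCK in E1c; rewrite conjC0 in E1c.
  have hb' : conjC wai != 0 by rewrite conjC_eq0.
  have h : conjC wai * ((wa - wa2i) * (wa + wa2i)) = 0.
    transitivity (wa * (wa * conjC wai + wa2i * conjC wa2) - wa2i * (conjC wai * wa2i + conjC wa2 * wa)); first ring.
    by rewrite E2 E1c; ring.
  have [s [hs hd]] : exists s : R[i], (s = 1 \/ s = -1) /\ wa2i = s * wa.
    move/eqP: h; rewrite mulf_eq0 (negbTE hb') /= mulf_eq0 => /orP[].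
      by rewrite subr_eq0 => /eqP ->; exists 1; split; [left|rewrite mul1r].
    by rewrite addr_eq0 => /eqP ->; exists (-1); split; [right|rewrite mulN1r opprK].
  have hsc : conjC s = s by case: hs => ->; rewrite ?conjC1 ?conjCN1.
  have hss : s * s = 1 by case: hs => ->; rewrite ?mulr1 ?mulrNN ?mulr1.
  have ns : s != 0 := nz_of_mul1 hss.
  have hc : wa2 = - (s * wai).
    have : conjC wa * (s * wai + wa2) = 0 by rewrite -E1 hd rmorphM /= hsc; ring.
    move/eqP; rewrite mulf_eq0 conjC_eq0 (negbTE na) /= addr_eq0 => /eqP ->; by rewrite opprK.
  have habs : wa * conjC wa = wai * conjC wai.
    have : (2 * s) * (wa * conjC wa - wai * conjC wai) = 0.
      by rewrite -E3 hd hc ?rmorphN /= !rmorphM /= hsc; ring.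
    by move/eqP; rewrite mulf_eq0 mulf_eq0 (negbTE n2) (negbTE ns) /= subr_eq0 => /eqP.
  have E0' : (1 + s * s) * (wa * conjC wa + wai * conjC wai) = 1.
    by rewrite -[RHS]E0 hd hc ?rmorphN /= !rmorphM /= hsc; ring.
  rewrite hss habs in E0'.
  have hc0 : `|2 * wai| = 1.
    apply/eqP; rewrite -sqrp_eq1 ?normr_ge0 // normCK rmorphM /= conjC_nat.
    by apply/eqP; rewrite -[RHS]E0'; ring.
  have [phi hphi] : exists phi, expi phi = wa / wai.
    apply: angle; rewrite rmorphM /= fmorphV /=.
    have nbb : wai * conjC wai != 0 by rewrite mulf_neq0.
    transitivity ((wa * conjC wa) / (wai * conjC wai)); first by field; rewrite fmorph_eq0 nb.
    by rewrite habs divff.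
  case: hs => hs; subst s.
    exists (2 * wai), phi, 1; split => //; split.
    - by rewrite hphi; field.
    - by field.
    - by rewrite hc expr1z; field.
    - by rewrite hd hphi expfzDr // expr1z; field.
  exists (2 * wai), phi, 0; split => //; split.
  - by rewrite hphi; field.
  - by field.
  - by rewrite hc expr0z; field.
  - by rewrite hd hphi add0r expr1z; field.
move=> [c0 [phi [q [hc [-> -> -> ->]]]]].
have hs : ((-1) ^ q : R[i]) = 1 \/ ((-1) ^ q : R[i]) = -1.
  case: q => n; [change ((-1) ^ (Posz n)) with ((-1) ^+ n : R[i]) | change ((-1) ^ (Negz n)) with (((-1) ^+ n.+1)^-1 : R[i])];
  rewrite -signr_odd; case: (odd _); rewrite ?expr1 ?expr0 ?invrN1 ?invr1; auto.
have hq1 : ((-1) ^ (q+1) : R[i]) = - (-1) ^ q by rewrite expfzDr // expr1z mulrN1.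
rewrite hq1; move: hs; generalize ((-1)^q : R[i]) => s hs.
have hcc : conjC c0 = c0^-1 by apply: conj_inv; rewrite -normCK hc expr1n.
have hee : conjC (expi phi) = (expi phi)^-1 by apply: conj_inv; apply: expi_conj.
have nc0 : c0 != 0 by rewrite -normr_eq0 hc oner_eq0.
have ne : expi phi != 0 := nz_of_mul1 (expi_conj _ phi).
move: (expi phi) hee ne => e hee ne.
have hU : walkC6 (c0 * (2^-1 * e)) (c0 * 2^-1) (c0 * (s / 2)) (c0 * (- s / 2 * e)) \is unitarymx.
  apply/unitary_conds; case: hs => ->;
  rewrite /conds !rmorphM /= ?rmorphN /= !fmorphV /= ?conjC_nat ?conjC1 ?rmorphN /= ?conjC1 ?rmorphM /= ?hcc ?hee;
  by split; field; rewrite ?nc0 ?ne.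
split; first exact: hU.
split; first by rewrite trmx_unitary.
have ns : s != 0 by case: hs => ->; rewrite ?oppr_eq0 oner_eq0.
by split; repeat apply: mulf_neq0; rewrite ?invr_eq0 ?oppr_eq0.
Qed.
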